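(* For parameters $a,b,t>0$ with $1/t<1/a<b<t$, the quantity $$Q(a,b;t)=\frac{I_1+I_3}{I_2}-\frac{J_1+J_3}{J_2}$$ does not depend on $\rho$, and if $Q(a,b;t)=0$ then there is a unique $\rho>0$ for which $I_1+I_3=J_1+J_3$ and $I_2=J_2$ hold.
   Context: Weierstrass data: for real $a,b,t>0$ with $1/t<1/a<b<t$ and $\rho>0$, set $\phi_1=-\rho\,(z+a)^{1/2}(z+1/b)^{-1/2}(z-1/a)^{1/2}(z-b)^{-1/2}[(z+t)(z+1/t)(z-1/t)(z-t)]^{-1/2}dz$ and $\phi_2=\rho^{-1}(z+a)^{-1/2}(z+1/b)^{1/2}(z-1/a)^{-1/2}(z-b)^{1/2}[(z+t)(z+1/t)(z-1/t)(z-t)]^{-1/2}dz$; let $v_1<\dots<v_8$ be $-t,-a,-1/b,-1/t,1/t,1/a,b,t$, and $I_k=\int_{v_k}^{v_{k+1}}|\phi_1|$, $J_k=\int_{v_k}^{v_{k+1}}|\phi_2|$ (integrals of absolute values of the coefficient functions over real intervals). *)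

(* Defs.v *)
From Stdlib Require Import Reals Lra ClassicalEpsilon.
Open Scope R_scope.

Definition is_imp_int (f : R -> R) (c d l : R) : Prop :=
  forall eps, 0 < eps -> exists delta, 0 < delta /\
    forall x y, c < x < c + delta -> d - delta < y < d ->
      exists pr : Riemann_integrable f x y, Rabs (RiemannInt pr - l) < eps.

(* The value of the improper integral (chosen by classical description;
   it is unique whenever it exists). *)
Definition imp_int (f : R -> R) (c d : R) : R :=
  epsilon (inhabits 0) (fun l => is_imp_int f c d l).

Definition Pt (t z : R) : R := (z + t) * (z + / t) * (z - / t) * (z - t).

Definition phi1abs (a b t rho z : R) : R :=
  rho * sqrt (Rabs ((z + a) * (z - / a)) / Rabs ((z + / b) * (z - b)))
      / sqrt (Rabs (Pt t z)).

Definition phi2abs (a b t rho z : R) : R :=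
  / rho * sqrt (Rabs ((z + / b) * (z - b)) / Rabs ((z + a) * (z - / a)))
      / sqrt (Rabs (Pt t z)).

Definition vtx (a b t : R) (k : nat) : R :=
  match k with
  | 1%nat => - t | 2%nat => - a | 3%nat => - / b | 4%nat => - / t
  | 5%nat => / t | 6%nat => / a | 7%nat => b | _ => t
  end.

Definition Ik (a b t rho : R) (k : nat) : R :=
  imp_int (phi1abs a b t rho) (vtx a b t k) (vtx a b t (S k)).
Definition Jk (a b t rho : R) (k : nat) : R :=
  imp_int (phi2abs a b t rho) (vtx a b t k) (vtx a b t (S k)).

Definition Qrho (a b t rho : R) : R :=
  (Ik a b t rho 1 + Ik a b t rho 3) / Ik a b t rho 2
  - (Jk a b t rho 1 + Jk a b t rho 3) / Jk a b t rho 2.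

(* Q(a,b;t), evaluated at rho = 1 (the theorem says it is rho-independent). *)
Definition Q (a b t : R) : R := Qrho a b t 1.

(* Main.v *)
Require Import Defs.
From Stdlib Require Import Reals Lra Lia ClassicalEpsilon FunctionalExtensionality.
From Coquelicot Require Import Coquelicot.
Open Scope R_scope.


Lemma dom_int (K c d x y : R) : 0 <= K -> c < x -> x <= y -> y < d ->
  RInt (fun z => K * (/ sqrt (z - c) + / sqrt (d - z))) x y
  = 2 * K * (sqrt (y - c) - sqrt (d - y)) - 2 * K * (sqrt (x - c) - sqrt (d - x)).
Proof.
  intros HK Hx Hxy Hy.
  apply is_RInt_unique.
  apply (is_RInt_derive (fun z => 2 * K * (sqrt (z - c) - sqrt (d - z)))).
  - intros z Hz. rewrite Rmin_left in Hz by lra. rewrite Rmax_right in Hz by lra.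
    auto_derive.
    + split; [lra|split;[lra|exact I]].
    + assert (0 < sqrt (z - c)) by (apply sqrt_lt_R0; lra).
      assert (0 < sqrt (d - z)) by (apply sqrt_lt_R0; lra).
      unfold Rminus in *. field. split; lra.
  - intros z Hz. rewrite Rmin_left in Hz by lra. rewrite Rmax_right in Hz by lra.
    apply continuity_pt_filterlim.
    apply continuity_pt_mult. apply continuity_pt_const. intros u v; reflexivity.
    apply continuity_pt_plus.
    + apply continuity_pt_inv.
      apply (continuity_pt_comp (fun z => z - c) sqrt).
      apply continuity_pt_minus. apply derivable_continuous_pt, derivable_pt_id.
      apply continuity_pt_const. intros u v; reflexivity.
      apply continuity_pt_sqrt. lra.
      apply Rgt_not_eq, sqrt_lt_R0; lra.
    + apply continuity_pt_inv.
      apply (continuity_pt_comp (fun z => d - z) sqrt).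
      apply continuity_pt_minus. apply continuity_pt_const. intros u v; reflexivity.
      apply derivable_continuous_pt, derivable_pt_id.
      apply continuity_pt_sqrt. lra.
      apply Rgt_not_eq, sqrt_lt_R0; lra.
Qed.


Lemma exRI (f : R -> R) x y : x <= y -> (forall z, x <= z <= y -> continuous f z) -> ex_RInt f x y.
Proof.
  intros H Hc. apply (@ex_RInt_continuous R_CompleteNormedModule). intros z Hz.
  rewrite Rmin_left in Hz by lra. rewrite Rmax_right in Hz by lra. auto.
Qed.

Lemma imp_exists (f : R -> R) c d K : c < d -> 0 <= K ->
  (forall z, c < z < d -> continuous f z) ->
  (forall z, c < z < d -> 0 <= f z) ->
  (forall z, c < z < d -> f z <= K * (/ sqrt (z - c) + / sqrt (d - z))) ->
  exists l, is_imp_int f c d l /\ forall x y, c < x -> x < y -> y < d -> RInt f x y <= l.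
Proof.
  intros Hcd HK Hc Hp Hb.
  set (E := fun v => exists x y, c < x /\ x < y /\ y < d /\ v = RInt f x y).
  assert (Hbd : forall x y, c < x -> x < y -> y < d -> RInt f x y <= 4 * K * sqrt (d - c)).
  { intros x y H1 H2 H3.
    assert (ex_RInt f x y) by (apply exRI; [lra| intros; apply Hc; lra]).
    assert (ex_RInt (fun z => K * (/ sqrt (z - c) + / sqrt (d - z))) x y).
    { apply exRI; [lra|]. intros z Hz.
      apply continuity_pt_filterlim.
      apply continuity_pt_mult. apply continuity_pt_const. intros u v; reflexivity.
      apply continuity_pt_plus.
      + apply continuity_pt_inv.
        apply (continuity_pt_comp (fun z => z - c) sqrt).
        apply continuity_pt_minus. apply derivable_continuous_pt, derivable_pt_id.
        apply continuity_pt_const. intros u v; reflexivity.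
        apply continuity_pt_sqrt. lra.
        apply Rgt_not_eq, sqrt_lt_R0; lra.
      + apply continuity_pt_inv.
        apply (continuity_pt_comp (fun z => d - z) sqrt).
        apply continuity_pt_minus. apply continuity_pt_const. intros u v; reflexivity.
        apply derivable_continuous_pt, derivable_pt_id.
        apply continuity_pt_sqrt. lra.
        apply Rgt_not_eq, sqrt_lt_R0; lra. }
    eapply Rle_trans. apply RInt_le; try eassumption. lra.
    intros z Hz; apply Hb; lra.
    rewrite dom_int by lra.
    assert (sqrt (y - c) <= sqrt (d - c)) by (apply sqrt_le_1_alt; lra).
    assert (sqrt (d - x) <= sqrt (d - c)) by (apply sqrt_le_1_alt; lra).
    assert (0 <= sqrt (x - c)) by apply sqrt_pos.
    assert (0 <= sqrt (d - y)) by apply sqrt_pos.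
    nra. }
  destruct (completeness E) as [l [Hub Hlub]].
  { exists (4 * K * sqrt (d - c)). intros v [x [y [H1 [H2 [H3 ->]]]]]. apply Hbd; lra. }
  { exists (RInt f (c + (d - c)/3) (c + 2*(d-c)/3)). do 2 eexists; repeat split; try reflexivity; lra. }
  exists l. split.
  2:{ intros x y H1 H2 H3. apply Hub. exists x, y; repeat split; auto. }
  intros eps Heps.
  assert (exists v, E v /\ l - eps < v) as [v [[x0 [y0 [H1 [H2 [H3 ->]]]]] Hv]].
  { apply Classical_Prop.NNPP. intro Hn.
    assert (l <= l - eps); [|lra].
    apply Hlub. intros v Ev. apply Rnot_lt_le. intro Hlt. apply Hn. exists v; split; auto. }
  exists (Rmin (x0 - c) (d - y0)). split. apply Rmin_pos; lra.
  intros x y Hx Hy.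
  assert (x0 - c >= Rmin (x0 - c) (d - y0)) by (apply Rle_ge, Rmin_l).
  assert (d - y0 >= Rmin (x0 - c) (d - y0)) by (apply Rle_ge, Rmin_r).
  assert (Hex : ex_RInt f x y) by (apply exRI; [lra| intros; apply Hc; lra]).
  exists (ex_RInt_Reals_0 _ _ _ Hex). rewrite <- RInt_Reals.
  assert (e1 : ex_RInt f x x0) by (apply exRI; [lra| intros; apply Hc; lra]).
  assert (e2 : ex_RInt f x0 y0) by (apply exRI; [lra| intros; apply Hc; lra]).
  assert (e3 : ex_RInt f y0 y) by (apply exRI; [lra| intros; apply Hc; lra]).
  assert (RInt f x y = RInt f x x0 + RInt f x0 y0 + RInt f y0 y).
  { rewrite <- (RInt_Chasles f x x0 y) by (auto; eapply ex_RInt_Chasles; eauto).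
    rewrite <- (RInt_Chasles f x0 y0 y) by auto. unfold plus; simpl. ring. }
  assert (0 <= RInt f x x0) by (apply RInt_ge_0; auto; try lra; intros; apply Hp; lra).
  assert (0 <= RInt f y0 y) by (apply RInt_ge_0; auto; try lra; intros; apply Hp; lra).
  assert (RInt f x y <= l) by (apply Hub; exists x, y; repeat split; auto; lra).
  apply Rabs_def1; lra.
Qed.

Lemma imp_unique f c d l1 l2 : is_imp_int f c d l1 -> is_imp_int f c d l2 -> c < d -> l1 = l2.
Proof.
  intros H1 H2 Hcd. apply Classical_Prop.NNPP. intro Hne.
  assert (He : 0 < Rabs (l1 - l2) / 2) by (apply Rdiv_lt_0_compat; [apply Rabs_pos_lt; lra|lra]).
  destruct (H1 _ He) as [d1 [Hd1 P1]]. destruct (H2 _ He) as [d2 [Hd2 P2]].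
  set (e := Rmin (Rmin d1 d2) ((d - c)/2)).
  assert (0 < e) by (apply Rmin_pos; [apply Rmin_pos|]; lra).
  assert (e <= d1) by (unfold e; eapply Rle_trans; [apply Rmin_l| apply Rmin_l]).
  assert (e <= d2) by (unfold e; eapply Rle_trans; [apply Rmin_l| apply Rmin_r]).
  assert (e <= (d-c)/2) by (unfold e; apply Rmin_r).
  destruct (P1 (c + e/2) (d - e/2)) as [p1 Q1]; try lra.
  destruct (P2 (c + e/2) (d - e/2)) as [p2 Q2]; try lra.
  rewrite (RiemannInt_P5 p2 p1) in Q2.
  assert (Rabs (l1 - l2) <= Rabs (RiemannInt p1 - l1) + Rabs (RiemannInt p1 - l2)).
  { replace (l1 - l2) with (-(RiemannInt p1 - l1) + (RiemannInt p1 - l2)) by ring.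
    eapply Rle_trans. apply Rabs_triang. rewrite Rabs_Ropp. lra. }
  lra.
Qed.

Lemma imp_int_val f c d l : c < d -> is_imp_int f c d l -> imp_int f c d = l.
Proof.
  intros Hcd H. unfold imp_int.
  apply (imp_unique f c d); auto.
  apply epsilon_spec. exists l; auto.
Qed.

Lemma imp_scal f c d l k : 0 < k -> is_imp_int f c d l -> is_imp_int (fun z => k * f z) c d (k * l).
Proof.
  intros Hk H eps Heps.
  destruct (H (eps / k)) as [dl [Hdl P]]. apply Rdiv_lt_0_compat; lra.
  exists dl; split; auto. intros x y Hx Hy.
  destruct (P x y Hx Hy) as [pr Hpr].
  pose proof (ex_RInt_scal _ _ _ k (ex_RInt_Reals_1 _ _ _ pr)) as E.
  exists (ex_RInt_Reals_0 _ _ _ E). rewrite <- RInt_Reals.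
  assert (Hs : RInt (fun z => k * f z) x y = k * RInt f x y) by (exact (RInt_scal (V:=R_CompleteNormedModule) f x y k (ex_RInt_Reals_1 _ _ _ pr))). rewrite Hs.
  rewrite RInt_Reals with (pr := pr). unfold scal; simpl; unfold mult; simpl.
  replace (k * RiemannInt pr - k * l) with (k * (RiemannInt pr - l)) by ring.
  rewrite Rabs_mult, Rabs_pos_eq by lra.
  apply Rmult_lt_reg_l with (/ k). apply Rinv_0_lt_compat; lra.
  rewrite <- Rmult_assoc, Rinv_l, Rmult_1_l by lra. rewrite Rmult_comm. exact Hpr.
Qed.


Lemma conv_bound (f c d z K0 : R) : c < z < d -> 0 <= f -> 0 <= K0 ->
  f ^ 2 * (z - c) * (d - z) <= K0 ->
  f <= sqrt (2 * K0 / (d - c)) * (/ sqrt (z - c) + / sqrt (d - z)).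
Proof.
  intros Hz Hf HK H.
  assert (Hc : 0 < sqrt (z - c)) by (apply sqrt_lt_R0; lra).
  assert (Hd : 0 < sqrt (d - z)) by (apply sqrt_lt_R0; lra).
  assert (Hs : 0 <= sqrt (2 * K0 / (d - c))) by apply sqrt_pos.
  assert (0 < / sqrt (z - c)) by (apply Rinv_0_lt_compat; lra).
  assert (0 < / sqrt (d - z)) by (apply Rinv_0_lt_compat; lra).
  destruct (Rle_dec (z - c) (d - z)) as [Hle|Hle].
  - assert (f * sqrt (z - c) <= sqrt (2 * K0 / (d - c))).
    { rewrite <- (sqrt_pow2 f) by auto. rewrite <- sqrt_mult by (try apply pow2_ge_0; lra).
      apply sqrt_le_1_alt.
      apply Rmult_le_reg_r with (d - z). lra.
      eapply Rle_trans. exact H.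
      unfold Rdiv. rewrite Rmult_assoc.
      assert (2 * K0 * (/ (d - c) * (d - z)) >= K0 * 1); [|lra].
      apply Rle_ge. replace (2 * K0 * (/ (d - c) * (d - z))) with (K0 * (2 * (d-z) / (d - c))) by (field; lra).
      apply Rmult_le_compat_l; auto.
      apply Rmult_le_reg_r with (d - c). lra. unfold Rdiv. rewrite Rmult_assoc, Rinv_l; lra. }
    assert (f <= sqrt (2 * K0 / (d - c)) * / sqrt (z - c)).
    { apply Rmult_le_reg_r with (sqrt (z - c)); auto. rewrite Rmult_assoc, Rinv_l; lra. }
    nra.
  - assert (f * sqrt (d - z) <= sqrt (2 * K0 / (d - c))).
    { rewrite <- (sqrt_pow2 f) by auto. rewrite <- sqrt_mult by (try apply pow2_ge_0; lra).
      apply sqrt_le_1_alt.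
      apply Rmult_le_reg_r with (z - c). lra.
      eapply Rle_trans. replace (f ^ 2 * (d - z) * (z - c)) with (f ^ 2 * (z - c) * (d - z)) by ring. exact H.
      unfold Rdiv. rewrite Rmult_assoc.
      assert (2 * K0 * (/ (d - c) * (z - c)) >= K0 * 1); [|lra].
      apply Rle_ge. replace (2 * K0 * (/ (d - c) * (z - c))) with (K0 * (2 * (z - c) / (d - c))) by (field; lra).
      apply Rmult_le_compat_l; auto.
      apply Rmult_le_reg_r with (d - c). lra. unfold Rdiv. rewrite Rmult_assoc, Rinv_l; lra. }
    assert (f <= sqrt (2 * K0 / (d - c)) * / sqrt (d - z)).
    { apply Rmult_le_reg_r with (sqrt (d - z)); auto. rewrite Rmult_assoc, Rinv_l; lra. }
    nra.
Qed.

Lemma frac_le n N D d : 0 <= n <= N -> 0 < D <= d -> n / d <= N / D.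
Proof.
  intros [H1 H2] [H3 H4]. unfold Rdiv.
  apply Rmult_le_compat; auto. left; apply Rinv_0_lt_compat; lra.
  apply Rinv_le_contravar; lra.
Qed.

Lemma sq_helper k U V : 0 <= U -> 0 < V -> (k * sqrt U / sqrt V) ^ 2 = k ^ 2 * U / V.
Proof.
  intros HU HV. assert (0 < sqrt V) by (apply sqrt_lt_R0; lra).
  replace ((k * sqrt U / sqrt V) ^ 2) with (k ^ 2 * (sqrt U) ^ 2 / (sqrt V) ^ 2) by (field; lra).
  rewrite !pow2_sqrt by lra. reflexivity.
Qed.

Lemma sq_phi1 a b t z : Rabs ((z + / b) * (z - b)) <> 0 -> Rabs (Pt t z) <> 0 ->
  phi1abs a b t 1 z ^ 2 = Rabs ((z + a) * (z - / a)) / Rabs ((z + / b) * (z - b)) / Rabs (Pt t z).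
Proof.
  intros H1 H2. unfold phi1abs.
  assert (0 <= Rabs ((z + a) * (z - / a)) / Rabs ((z + / b) * (z - b))).
  { apply Rdiv_le_0_compat. apply Rabs_pos. pose proof (Rabs_pos ((z + / b) * (z - b))); lra. }
  assert (0 < Rabs (Pt t z)) by (pose proof (Rabs_pos (Pt t z)); lra).
  assert (0 < sqrt (Rabs (Pt t z))) by (apply sqrt_lt_R0; lra).
  rewrite sq_helper by lra. field. lra.
Qed.

Lemma sq_phi2 a b t z : Rabs ((z + a) * (z - / a)) <> 0 -> Rabs (Pt t z) <> 0 ->
  phi2abs a b t 1 z ^ 2 = Rabs ((z + / b) * (z - b)) / Rabs ((z + a) * (z - / a)) / Rabs (Pt t z).
Proof.
  intros H1 H2. unfold phi2abs.
  assert (0 <= Rabs ((z + / b) * (z - b)) / Rabs ((z + a) * (z - / a))).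
  { apply Rdiv_le_0_compat. apply Rabs_pos. pose proof (Rabs_pos ((z + a) * (z - / a))); lra. }
  assert (0 < Rabs (Pt t z)) by (pose proof (Rabs_pos (Pt t z)); lra).
  assert (0 < sqrt (Rabs (Pt t z))) by (apply sqrt_lt_R0; lra).
  rewrite sq_helper by lra. field. lra.
Qed.


Lemma cont_poly_abs (p : R -> R) z : continuity_pt p z -> continuity_pt (fun x => Rabs (p x)) z.
Proof. intros H. apply (continuity_pt_comp p Rabs); auto. apply Rcontinuity_abs. Qed.

Lemma cont_sqrt_of (p : R -> R) z : continuity_pt p z -> 0 <= p z -> continuity_pt (fun x => sqrt (p x)) z.
Proof. intros H H0. apply (continuity_pt_comp p sqrt); auto. apply continuity_pt_sqrt; auto. Qed.

Lemma cont_gen (k : R) (N D P : R -> R) z :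
  continuity_pt N z -> continuity_pt D z -> continuity_pt P z -> D z <> 0 -> P z <> 0 ->
  continuous (fun x => k * sqrt (Rabs (N x) / Rabs (D x)) / sqrt (Rabs (P x))) z.
Proof.
  intros HN HD HP HD0 HP0. apply continuity_pt_filterlim.
  apply continuity_pt_div.
  - apply continuity_pt_mult. apply continuity_pt_const; intros u v; reflexivity.
    apply cont_sqrt_of.
    + apply continuity_pt_div; try apply cont_poly_abs; auto. apply Rabs_no_R0; auto.
    + apply Rdiv_le_0_compat. apply Rabs_pos. apply Rabs_pos_lt; auto.
  - apply cont_sqrt_of. apply cont_poly_abs; auto. apply Rabs_pos.
  - apply Rgt_not_eq, sqrt_lt_R0, Rabs_pos_lt; auto.
Qed.

Lemma cont_phi1 a b t rho z : (z + / b) * (z - b) <> 0 -> Pt t z <> 0 -> continuous (phi1abs a b t rho) z.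
Proof.
  intros H1 H2. unfold phi1abs.
  apply (cont_gen rho (fun z => (z + a) * (z - / a)) (fun z => (z + / b) * (z - b)) (Pt t)); auto;
  unfold Pt; reg.
Qed.

Lemma cont_phi2 a b t rho z : (z + a) * (z - / a) <> 0 -> Pt t z <> 0 -> continuous (phi2abs a b t rho) z.
Proof.
  intros H1 H2. unfold phi2abs.
  apply (cont_gen (/ rho) (fun z => (z + / b) * (z - b)) (fun z => (z + a) * (z - / a)) (Pt t)); auto;
  unfold Pt; reg.
Qed.


Ltac prodb := repeat (apply Rmult_le_compat || apply Rmult_le_pos || apply Rmult_lt_0_compat); try lra.

Section S.
Variables a b t : R.
Hypotheses (ha : 0 < a) (hb : 0 < b) (ht : 0 < t) (h1 : / t < / a) (h2 : / a < b) (h3 : b < t).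

Lemma facts : a < t /\ / b < a /\ / t < / b /\ 0 < / t /\ 0 < / b /\ 0 < / a /\ / t < t.
Proof.
  assert (0 < / t) by (apply Rinv_0_lt_compat; lra).
  assert (0 < / b) by (apply Rinv_0_lt_compat; lra).
  assert (0 < / a) by (apply Rinv_0_lt_compat; lra).
  assert (a < t). { rewrite <- (Rinv_inv a), <- (Rinv_inv t). apply Rinv_lt_contravar; auto. nra. }
  assert (/ b < a). { rewrite <- (Rinv_inv a). apply Rinv_lt_contravar; auto. nra. }
  assert (/ t < / b) by (apply Rinv_lt_contravar; nra).
  repeat split; lra.
Qed.

Definition M := 2 * t.
Definition m := Rmin (Rmin (Rmin (t - a) (a - / b)) (Rmin (/ b - / t) (2 * / t)))
                     (Rmin (Rmin (/ a - / t) (b - / a)) (t - b)).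

Lemma m_facts : 0 < m /\ m <= t - a /\ m <= a - / b /\ m <= / b - / t /\ m <= 2 * / t
  /\ m <= / a - / t /\ m <= b - / a /\ m <= t - b.
Proof.
  pose proof facts. unfold m.
  unfold Rmin; repeat destruct Rle_dec; repeat split; lra.
Qed.

Ltac nzt := match goal with |- _ <> 0 => idtac end;
  assert (t * / t = 1) by (field; lra); assert (b * / b = 1) by (field; lra);
  assert (a * / a = 1) by (field; lra); nra.

Ltac setup := pose proof facts; pose proof m_facts; assert (M = 2 * t) by reflexivity.

Lemma nz1 z : z < / t -> - t < z -> z <> - a -> z <> / a -> z <> - / b -> z <> b -> z <> - / t ->
  (z + a) * (z - / a) <> 0 /\ (z + / b) * (z - b) <> 0 /\ Pt t z <> 0.
Proof.
  intros. pose proof facts. unfold Pt. repeat split;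
  repeat apply Rmult_integral_contrapositive_currified; lra.
Qed.

Lemma b11 z : - t < z < - a -> phi1abs a b t 1 z ^ 2 * (z - - t) * (- a - z) <= M * M * M / (m * m * m * m * m).
Proof.
  intros Hz. setup. destruct (nz1 z) as [n1 [n2 n3]]; try lra.
  rewrite sq_phi1 by (apply Rabs_no_R0; auto). unfold Pt. rewrite !Rabs_mult.
  rewrite (Rabs_pos_eq (z + t)) by lra.
  rewrite (Rabs_left (z + a)), (Rabs_left (z - / a)), (Rabs_left (z + / b)), (Rabs_left (z - b)),
    (Rabs_left (z + / t)), (Rabs_left (z - / t)), (Rabs_left (z - t)) by lra.
  apply Rle_trans with ((-(z+a)) * (-(z-/a)) * (-a-z) / ((-(z+/b)) * (-(z-b)) * (-(z+/t)) * (-(z-/t)) * (-(z-t)))).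
  - apply Req_le. field. repeat split; nzt.
  - apply frac_le; split; prodb.
Qed.

Lemma b12 z : - t < z < - a -> phi2abs a b t 1 z ^ 2 * (z - - t) * (- a - z) <= M * M / (m * m * m * m).
Proof.
  intros Hz. setup. destruct (nz1 z) as [n1 [n2 n3]]; try lra.
  rewrite sq_phi2 by (apply Rabs_no_R0; auto). unfold Pt. rewrite !Rabs_mult.
  rewrite (Rabs_pos_eq (z + t)) by lra.
  rewrite (Rabs_left (z + a)), (Rabs_left (z - / a)), (Rabs_left (z + / b)), (Rabs_left (z - b)),
    (Rabs_left (z + / t)), (Rabs_left (z - / t)), (Rabs_left (z - t)) by lra.
  apply Rle_trans with ((-(z+/b)) * (-(z-b)) / ((-(z-/a)) * (-(z+/t)) * (-(z-/t)) * (-(z-t)))).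
  - apply Req_le. field. repeat split; nzt.
  - apply frac_le; split; prodb.
Qed.

Lemma b21 z : - a < z < - / b -> phi1abs a b t 1 z ^ 2 * (z - - a) * (- / b - z) <= M * M * M / (m * m * m * m * m).
Proof.
  intros Hz. setup. destruct (nz1 z) as [n1 [n2 n3]]; try lra.
  rewrite sq_phi1 by (apply Rabs_no_R0; auto). unfold Pt. rewrite !Rabs_mult.
  rewrite (Rabs_pos_eq (z + t)), (Rabs_pos_eq (z + a)) by lra.
  rewrite (Rabs_left (z - / a)), (Rabs_left (z + / b)), (Rabs_left (z - b)),
    (Rabs_left (z + / t)), (Rabs_left (z - / t)), (Rabs_left (z - t)) by lra.
  apply Rle_trans with ((z+a) * (-(z-/a)) * (z - - a) / ((-(z-b)) * (z+t) * (-(z+/t)) * (-(z-/t)) * (-(z-t)))).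
  - apply Req_le. field. repeat split; nzt.
  - apply frac_le; split; prodb.
Qed.

Lemma b22 z : - a < z < - / b -> phi2abs a b t 1 z ^ 2 * (z - - a) * (- / b - z) <= M * M * M / (m * m * m * m * m).
Proof.
  intros Hz. setup. destruct (nz1 z) as [n1 [n2 n3]]; try lra.
  rewrite sq_phi2 by (apply Rabs_no_R0; auto). unfold Pt. rewrite !Rabs_mult.
  rewrite (Rabs_pos_eq (z + t)), (Rabs_pos_eq (z + a)) by lra.
  rewrite (Rabs_left (z - / a)), (Rabs_left (z + / b)), (Rabs_left (z - b)),
    (Rabs_left (z + / t)), (Rabs_left (z - / t)), (Rabs_left (z - t)) by lra.
  apply Rle_trans with ((-(z+/b)) * (-(z-b)) * (- / b - z) / ((-(z-/a)) * (z+t) * (-(z+/t)) * (-(z-/t)) * (-(z-t)))).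
  - apply Req_le. field. repeat split; nzt.
  - apply frac_le; split; prodb.
Qed.

Lemma b31 z : - / b < z < - / t -> phi1abs a b t 1 z ^ 2 * (z - - / b) * (- / t - z) <= M * M / (m * m * m * m).
Proof.
  intros Hz. setup. destruct (nz1 z) as [n1 [n2 n3]]; try lra.
  rewrite sq_phi1 by (apply Rabs_no_R0; auto). unfold Pt. rewrite !Rabs_mult.
  rewrite (Rabs_pos_eq (z + t)), (Rabs_pos_eq (z + a)), (Rabs_pos_eq (z + / b)) by lra.
  rewrite (Rabs_left (z - / a)), (Rabs_left (z - b)),
    (Rabs_left (z + / t)), (Rabs_left (z - / t)), (Rabs_left (z - t)) by lra.
  apply Rle_trans with ((z+a) * (-(z-/a)) / ((-(z-b)) * (z+t) * (-(z-/t)) * (-(z-t)))).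
  - apply Req_le. field. repeat split; nzt.
  - apply frac_le; split; prodb.
Qed.

Lemma b32 z : - / b < z < - / t -> phi2abs a b t 1 z ^ 2 * (z - - / b) * (- / t - z) <= M * M * M / (m * m * m * m * m).
Proof.
  intros Hz. setup. destruct (nz1 z) as [n1 [n2 n3]]; try lra.
  rewrite sq_phi2 by (apply Rabs_no_R0; auto). unfold Pt. rewrite !Rabs_mult.
  rewrite (Rabs_pos_eq (z + t)), (Rabs_pos_eq (z + a)), (Rabs_pos_eq (z + / b)) by lra.
  rewrite (Rabs_left (z - / a)), (Rabs_left (z - b)),
    (Rabs_left (z + / t)), (Rabs_left (z - / t)), (Rabs_left (z - t)) by lra.
  apply Rle_trans with ((z+/b) * (-(z-b)) * (z - - / b) / ((z+a) * (-(z-/a)) * (z+t) * (-(z-/t)) * (-(z-t)))).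
  - apply Req_le. field. repeat split; nzt.
  - apply frac_le; split; prodb.
Qed.
End S.


Lemma ex_case (f : R -> R) c d K0 : c < d -> 0 <= K0 ->
  (forall z, c < z < d -> continuous f z) -> (forall z, c < z < d -> 0 <= f z) ->
  (forall z, c < z < d -> f z ^ 2 * (z - c) * (d - z) <= K0) ->
  exists l, is_imp_int f c d l /\ forall x y, c < x -> x < y -> y < d -> RInt f x y <= l.
Proof.
  intros Hcd HK Hc Hp Hb.
  apply (imp_exists f c d (sqrt (2 * K0 / (d - c)))); auto. apply sqrt_pos.
  intros z Hz. apply conv_bound; auto.
Qed.

Section S.
Variables a b t : R.
Hypotheses (ha : 0 < a) (hb : 0 < b) (ht : 0 < t) (h1 : / t < / a) (h2 : / a < b) (h3 : b < t).

Lemma pos_gen k U V : 0 < k -> 0 < U -> 0 < V -> 0 < k * sqrt U / sqrt V.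
Proof.
  intros. apply Rdiv_lt_0_compat. apply Rmult_lt_0_compat; auto. apply sqrt_lt_R0; auto.
  apply sqrt_lt_R0; auto.
Qed.

Lemma nz z : - t < z < - / t -> z <> - a -> z <> - / b ->
  (z + a) * (z - / a) <> 0 /\ (z + / b) * (z - b) <> 0 /\ Pt t z <> 0.
Proof.
  intros. pose proof (facts a b t ha hb ht h1 h2 h3). apply nz1; auto; lra.
Qed.

Lemma pos1 z : - t < z < - / t -> z <> - a -> z <> - / b -> 0 < phi1abs a b t 1 z.
Proof.
  intros H H1 H2. destruct (nz z) as [n1 [n2 n3]]; auto. unfold phi1abs.
  apply pos_gen; try lra. apply Rdiv_lt_0_compat; apply Rabs_pos_lt; auto. apply Rabs_pos_lt; auto.
Qed.

Lemma pos2 z : - t < z < - / t -> z <> - a -> z <> - / b -> 0 < phi2abs a b t 1 z.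
Proof.
  intros H H1 H2. destruct (nz z) as [n1 [n2 n3]]; auto. unfold phi2abs. rewrite Rinv_1.
  apply pos_gen; try lra. apply Rdiv_lt_0_compat; apply Rabs_pos_lt; auto. apply Rabs_pos_lt; auto.
Qed.

Lemma c1 z : - t < z < - / t -> z <> - a -> z <> - / b -> continuous (phi1abs a b t 1) z.
Proof. intros H H1 H2. destruct (nz z) as [n1 [n2 n3]]; auto. apply cont_phi1; auto. Qed.
Lemma c2 z : - t < z < - / t -> z <> - a -> z <> - / b -> continuous (phi2abs a b t 1) z.
Proof. intros H H1 H2. destruct (nz z) as [n1 [n2 n3]]; auto. apply cont_phi2; auto. Qed.

Ltac Kpos := pose proof (m_facts a b t ha hb ht h1 h2 h3); unfold M;
  apply Rdiv_le_0_compat; [repeat apply Rmult_le_pos; lra | repeat apply Rmult_lt_0_compat; lra].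

Ltac doit lem cc pp :=
  pose proof (facts a b t ha hb ht h1 h2 h3);
  eapply ex_case; cycle 4; [intros z Hz; apply (lem a b t ha hb ht h1 h2 h3); lra
    | lra | Kpos | intros z Hz; apply cc; lra | intros z Hz; left; apply pp; lra].

Lemma E11 : exists l, is_imp_int (phi1abs a b t 1) (- t) (- a) l /\
  forall x y, - t < x -> x < y -> y < - a -> RInt (phi1abs a b t 1) x y <= l.
Proof. doit b11 c1 pos1. Qed.
Lemma E12 : exists l, is_imp_int (phi2abs a b t 1) (- t) (- a) l /\
  forall x y, - t < x -> x < y -> y < - a -> RInt (phi2abs a b t 1) x y <= l.
Proof. doit b12 c2 pos2. Qed.
Lemma E21 : exists l, is_imp_int (phi1abs a b t 1) (- a) (- / b) l /\
  forall x y, - a < x -> x < y -> y < - / b -> RInt (phi1abs a b t 1) x y <= l.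
Proof. doit b21 c1 pos1. Qed.
Lemma E22 : exists l, is_imp_int (phi2abs a b t 1) (- a) (- / b) l /\
  forall x y, - a < x -> x < y -> y < - / b -> RInt (phi2abs a b t 1) x y <= l.
Proof. doit b22 c2 pos2. Qed.
Lemma E31 : exists l, is_imp_int (phi1abs a b t 1) (- / b) (- / t) l /\
  forall x y, - / b < x -> x < y -> y < - / t -> RInt (phi1abs a b t 1) x y <= l.
Proof. doit b31 c1 pos1. Qed.
Lemma E32 : exists l, is_imp_int (phi2abs a b t 1) (- / b) (- / t) l /\
  forall x y, - / b < x -> x < y -> y < - / t -> RInt (phi2abs a b t 1) x y <= l.
Proof. doit b32 c2 pos2. Qed.
End S.


Lemma phi1_scal a b t rho : phi1abs a b t rho = fun z => rho * phi1abs a b t 1 z.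
Proof. apply functional_extensionality; intro z. unfold phi1abs, Rdiv. ring. Qed.
Lemma phi2_scal a b t rho : 0 < rho -> phi2abs a b t rho = fun z => / rho * phi2abs a b t 1 z.
Proof. intros. apply functional_extensionality; intro z. unfold phi2abs, Rdiv. rewrite Rinv_1. ring. Qed.

Lemma pos_lim (f : R -> R) c d l : c < d ->
  (forall x y, c < x -> x < y -> y < d -> RInt f x y <= l) ->
  (forall z, c < z < d -> continuous f z) -> (forall z, c < z < d -> 0 < f z) -> 0 < l.
Proof.
  intros Hcd HB Hc Hp.
  apply Rlt_le_trans with (RInt f (c + (d - c) / 3) (c + 2 * (d - c) / 3)).
  - apply RInt_gt_0. lra. intros; apply Hp; lra. intros; apply Hc; lra.
  - apply HB; lra.
Qed.

Theorem mainTheorem4 (a b t : R) (ha : 0 < a) (hb : 0 < b) (ht : 0 < t)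
  (h1 : / t < / a) (h2 : / a < b) (h3 : b < t) :
  (forall rho, 0 < rho -> Qrho a b t rho = Q a b t) /\
  (Q a b t = 0 ->
   exists! rho, 0 < rho /\
     Ik a b t rho 1 + Ik a b t rho 3 = Jk a b t rho 1 + Jk a b t rho 3 /\
     Ik a b t rho 2 = Jk a b t rho 2).
Proof.
  pose proof (facts a b t ha hb ht h1 h2 h3) as Fc.
  destruct (E11 a b t ha hb ht h1 h2 h3) as [L11 [H11 _]].
  destruct (E12 a b t ha hb ht h1 h2 h3) as [L12 [H12 _]].
  destruct (E21 a b t ha hb ht h1 h2 h3) as [L21 [H21 B21]].
  destruct (E22 a b t ha hb ht h1 h2 h3) as [L22 [H22 B22]].
  destruct (E31 a b t ha hb ht h1 h2 h3) as [L31 [H31 _]].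
  destruct (E32 a b t ha hb ht h1 h2 h3) as [L32 [H32 _]].
  assert (P21 : 0 < L21).
  { apply (pos_lim (phi1abs a b t 1) (- a) (- / b) L21); try lra; auto.
    intros; apply c1; auto; lra. intros; apply pos1; auto; lra. }
  assert (P22 : 0 < L22).
  { apply (pos_lim (phi2abs a b t 1) (- a) (- / b) L22); try lra; auto.
    intros; apply c2; auto; lra. intros; apply pos2; auto; lra. }
  assert (HI : forall rho, 0 < rho -> forall k, (1 <= k <= 3)%nat ->
     Ik a b t rho k = rho * match k with 1%nat => L11 | 2%nat => L21 | _ => L31 end /\
     Jk a b t rho k = / rho * match k with 1%nat => L12 | 2%nat => L22 | _ => L32 end).
  { intros rho Hr k Hk. unfold Ik, Jk. rewrite phi1_scal, phi2_scal by auto.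
    assert (Hr' : 0 < / rho) by (apply Rinv_0_lt_compat; auto).
    destruct k as [|[|[|[|k]]]]; try lia; cbn [vtx]; split; apply imp_int_val; try lra;
    apply imp_scal; auto. }
  assert (HQ : Q a b t = (L11 + L31) / L21 - (L12 + L32) / L22).
  { unfold Q, Qrho.
    destruct (HI 1 ltac:(lra) 1%nat ltac:(lia)) as [-> ->].
    destruct (HI 1 ltac:(lra) 2%nat ltac:(lia)) as [-> ->].
    destruct (HI 1 ltac:(lra) 3%nat ltac:(lia)) as [-> ->].
    rewrite Rinv_1. field. lra. }
  split.
  - intros rho Hr. rewrite HQ. unfold Qrho.
    destruct (HI rho Hr 1%nat ltac:(lia)) as [-> ->].
    destruct (HI rho Hr 2%nat ltac:(lia)) as [-> ->].
    destruct (HI rho Hr 3%nat ltac:(lia)) as [-> ->].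
    field. repeat split; lra.
  - intros HQ0. rewrite HQ in HQ0.
    assert (HR : 0 < L22 / L21) by (apply Rdiv_lt_0_compat; lra).
    exists (sqrt (L22 / L21)).
    assert (Hs : 0 < sqrt (L22 / L21)) by (apply sqrt_lt_R0; auto).
    assert (Hs2 : sqrt (L22 / L21) * sqrt (L22 / L21) = L22 / L21) by (apply sqrt_sqrt; lra).
    split.
    + split; auto.
      destruct (HI _ Hs 1%nat ltac:(lia)) as [-> ->].
      destruct (HI _ Hs 2%nat ltac:(lia)) as [-> ->].
      destruct (HI _ Hs 3%nat ltac:(lia)) as [-> ->].
      split.
      * assert (Hsum : L12 + L32 = L22 / L21 * (L11 + L31)).
        { assert (L12 + L32 = L22 * ((L11 + L31) / L21)); [|rewrite H; field; lra].
          apply (Rmult_eq_reg_r (/ L22)); [|apply Rinv_neq_0_compat; lra].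
          transitivity ((L12 + L32) / L22); [reflexivity|]. field_simplify_eq; try lra.
          apply (Rmult_eq_reg_r (/ (L21 * L22))); [|apply Rinv_neq_0_compat; nra].
          apply (Rplus_eq_reg_r (- ((L12 + L32) * L21 * / (L21 * L22)))).
          transitivity 0; [|symmetry; rewrite <- HQ0; field; lra]. field. lra. }
        transitivity (/ sqrt (L22 / L21) * (sqrt (L22 / L21) * sqrt (L22 / L21) * (L11 + L31))).
        field; lra. rewrite Hs2, <- Hsum. field; lra.
      * transitivity (/ sqrt (L22 / L21) * (sqrt (L22 / L21) * sqrt (L22 / L21) * L21)).
        field; lra. rewrite Hs2. field; lra.
    + intros rho [Hr [_ H2']].
      destruct (HI _ Hr 2%nat ltac:(lia)) as [E1 E2]. rewrite E1, E2 in H2'.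
      assert (rho * rho = L22 / L21).
      { apply (Rmult_eq_reg_r L21); [|lra].
        transitivity (rho * (rho * L21)); [ring|]. rewrite H2'. field. lra. }
      rewrite <- H. rewrite sqrt_square; lra.
Qed.
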